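(* Let $\mathbb{K}$ be an algebraically closed field of characteristic zero and let $D=\partial_x+(ay+b)\partial_y$ be a derivation of $\mathbb{K}[x,y]$ with $a,b\in\mathbb{K}[x]$, $a\neq 0$, and $\deg a\geq 1$ or $\deg b\geq 1$. Then $\mathrm{Aut}(D)\neq\{\mathrm{id}\}$ if and only if there exists $h\in\mathbb{K}[x]$ with $D(h)=ah+b$ (that is, $h'=ah+b$). In particular, if $\mathrm{Aut}(D)\neq\{\mathrm{id}\}$ and $b\neq 0$, then $\deg b\geq\deg a$.
   Context: $\mathrm{Aut}(D)$ denotes the group of $\mathbb{K}$-algebra automorphisms $\rho$ of $\mathbb{K}[x,y]$ with $\rho D=D\rho$. *)

(* Defs.v *)
From HB Require Import structures.
From mathcomp Require Import all_boot all_order all_algebra all_field.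
Set Implicit Arguments. Unset Strict Implicit. Unset Printing Implicit Defensive.
Import GRing.Theory.
Local Open Scope ring_scope.

(* K[x,y] is represented as {poly {poly K}}: the inner variable is x,
   the outer variable is y.  A polynomial p = \sum_i p_i(x) y^i. *)

Definition dx (K : fieldType) (p : {poly {poly K}}) : {poly {poly K}} :=
  map_poly (fun q : {poly K} => q^`()) p.

Definition dy (K : fieldType) (p : {poly {poly K}}) : {poly {poly K}} := p^`().

Definition Dab (K : fieldType) (a b : {poly K}) (p : {poly {poly K}})
  : {poly {poly K}} :=
  dx p + (a%:P * 'X + b%:P) * dy p.

Definition is_Kalg_aut (K : fieldType)
  (rho : {poly {poly K}} -> {poly {poly K}}) : Prop :=
  [/\ forall p q, rho (p + q) = rho p + rho q,
      forall p q, rho (p * q) = rho p * rho q,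
      forall c : K, rho (c%:P%:P) = c%:P%:P
    & bijective rho].

Definition in_AutD (K : fieldType) (D : {poly {poly K}} -> {poly {poly K}})
  (rho : {poly {poly K}} -> {poly {poly K}}) : Prop :=
  is_Kalg_aut rho /\ (forall p, rho (D p) = D (rho p)).

Definition AutD_nontrivial (K : fieldType)
  (D : {poly {poly K}} -> {poly {poly K}}) : Prop :=
  exists rho, in_AutD D rho /\ exists p, rho p <> p.

(* Main.v *)
Require Import Defs.
From HB Require Import structures.
From mathcomp Require Import all_boot all_order all_algebra all_field.
From mathcomp Require Import zify ring.
Import GRing.Theory.
Local Open Scope ring_scope.
Set Implicit Arguments. Unset Strict Implicit.

Section Aux.
Variable K : fieldType.
Hypothesis hK : [pchar K] =i pred0.
Implicit Types p q : {poly {poly K}}.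

Lemma mulrn_eq0K (x : K) n : (x *+ n == 0) = ((n == 0)%N || (x == 0)).
Proof. by rewrite -mulr_natr mulf_eq0 ((pcharf0P _).1 hK n) orbC. Qed.

Lemma mulrn_eq0P (x : {poly K}) n : (x *+ n == 0) = ((n == 0)%N || (x == 0)).
Proof.
case: (n =P 0)%N => [->|/eqP nn0] /=; first by rewrite mulr0n eqxx.
apply/idP/idP => [/eqP H|/eqP->]; last by rewrite mul0rn.
apply/eqP/polyP => i; move/polyP: H => /(_ i) /eqP.
by rewrite coefMn coef0 mulrn_eq0K (negPf nn0) => /eqP.
Qed.

Lemma deriv0_const (q : {poly K}) : q^`() = 0 -> q = (q`_0)%:P.
Proof.
move=> H; apply/polyP => i; rewrite coefC; case: i => [//|i] /=.
move/polyP: H => /(_ i) /eqP; rewrite coef_deriv coef0 mulrn_eq0K /=.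
by move/eqP.
Qed.

Lemma deriv_mul_eq0 (q r : {poly K}) : r != 0 -> q^`() = r * q -> q = 0.
Proof.
move=> rn0 H; apply/eqP; apply: contraT => qn0.
have := lt_size_deriv qn0; rewrite H size_mul //.
have : (0 < size r)%N by rewrite size_poly_gt0.
case: (size r) => // m _; rewrite addSn /= ltnNge leq_addl; done.
Qed.

Lemma dxD p q : dx (p + q) = dx p + dx q.
Proof. by apply/polyP => i; rewrite /dx coefD !coef_map /= coefD derivD. Qed.
Lemma dxN p : dx (- p) = - dx p.
Proof. by apply/polyP => i; rewrite /dx coefN !coef_map /= coefN derivN. Qed.
Lemma dxB p q : dx (p - q) = dx p - dx q.
Proof. by rewrite dxD dxN. Qed.
Lemma dxC (c : {poly K}) : dx c%:P = (c^`())%:P.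
Proof. by apply/polyP => i; rewrite /dx coef_map /= !coefC; case: (i == 0)%N; rewrite ?derivC. Qed.
Lemma dxX : dx 'X = 0 :> {poly {poly K}}.
Proof. by apply/polyP => i; rewrite /dx coef_map /= !coefX coef0; case: (i == 1)%N; rewrite ?derivC // -polyC1 derivC. Qed.
Lemma dxM p q : dx (p * q) = dx p * q + p * dx q.
Proof.
apply/polyP => i; rewrite /dx coefD !coef_map /= !coefM.
rewrite (@raddf_sum _ _ (@deriv K)) -big_split /=; apply: eq_bigr => j _.
by rewrite derivM !coef_map.
Qed.
Lemma dx_comp p G : dx (p \Po G) = dx p \Po G + (p^`() \Po G) * dx G.
Proof.
elim/poly_ind: p => [|p c IH].
  by rewrite comp_poly0 /dx !map_poly0 deriv0 comp_poly0 mul0r addr0.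
rewrite comp_polyD comp_polyM comp_polyX comp_polyC dxD dxM IH dxD dxM dxX dxC.
rewrite derivMXaddC mulr0 addr0 !comp_polyD !comp_polyM comp_polyX comp_polyC.
ring.
Qed.
Lemma DabD a b p q : Dab a b (p + q) = Dab a b p + Dab a b q.
Proof. by rewrite /Dab dxD /dy derivD mulrDr; ring. Qed.
Lemma DabB a b p q : Dab a b (p - q) = Dab a b p - Dab a b q.
Proof. by rewrite /Dab dxB /dy derivB mulrBr; ring. Qed.

Lemma coef_Dab a b p i :
  (Dab a b p)`_i = (p`_i)^`() + (a * p`_i) *+ i + (b * p`_i.+1) *+ i.+1.
Proof.
rewrite /Dab /dy coefD /dx coef_map /= mulrDl coefD -mulrA coefCM (mulrC 'X) coefMX coefCM addrA.
rewrite !coef_deriv; case: i => [|i] /=; first by rewrite mulr0 mulr0n.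
by rewrite -!mulrnAr.
Qed.

Lemma Dab_comp a b p G : Dab a b (p \Po G) =
  dx p \Po G + (p^`() \Po G) * (dx G + (a%:P * 'X + b%:P) * G^`()).
Proof. by rewrite /Dab dx_comp /dy deriv_comp; ring. Qed.

Lemma comp_Dab a b p G : (Dab a b p) \Po G =
  dx p \Po G + (a%:P * G + b%:P) * (p^`() \Po G).
Proof. by rewrite /Dab /dy comp_polyD comp_polyM comp_polyD comp_polyM comp_polyX !comp_polyC. Qed.

Lemma two_neq0 : (2%:R : K) != 0.
Proof. by rewrite ((pcharf0P _).1 hK 2). Qed.

Lemma aut_from_h (a b h : {poly K}) : h^`() = a * h + b -> AutD_nontrivial (Dab a b).
Proof.
move=> Hh.
pose G : {poly {poly K}} := 'X + 'X - h%:P.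
pose c : {poly {poly K}} := (2%:R^-1)%:P%:P.
pose Gi : {poly {poly K}} := c * ('X + h%:P).
have h2 : (2%:R^-1 : K) * 2%:R = 1 by rewrite mulVf // two_neq0.
have h2' : c + c = 1.
  by rewrite /c -!polyCD -mulr2n -(mulr_natr (2%:R^-1 : K) 2) h2.
have GGi : G \Po Gi = 'X.
  rewrite /G !comp_polyB !comp_polyD comp_polyX comp_polyC.
  have -> : Gi + Gi = (c + c) * ('X + h%:P) by rewrite /Gi; ring.
  by rewrite h2' mul1r addrK.
have GiG : Gi \Po G = 'X.
  rewrite /Gi comp_polyM comp_polyC comp_polyD comp_polyX comp_polyC /G.
  rewrite addrNK; have -> : c * ('X + 'X) = (c + c) * 'X by ring.
  by rewrite h2' mul1r.
exists (fun p => p \Po G); split; last first.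
  exists 'X; rewrite comp_polyX /G => /eqP.
  rewrite -subr_eq0 => /eqP /polyP /(_ 1%N).
  rewrite !coefB !coefD coefX coefC /= => /eqP.
  by rewrite coef0 subr0 addrK oner_eq0.
split; first split.
- by move=> p q; rewrite comp_polyD.
- by move=> p q; rewrite comp_polyM.
- by move=> e; rewrite comp_polyC.
- by exists (fun p => p \Po Gi) => p; rewrite -comp_polyA ?GGi ?GiG comp_polyXr.
move=> p; rewrite comp_Dab Dab_comp; congr (_ + _).
rewrite mulrC; congr (_ * _).
rewrite /G dxB dxD dxX addr0 sub0r dxC Hh derivB derivD derivX derivC subr0.
rewrite polyCD polyCM; ring.
Qed.

Lemma mulrn_inj (e : K) : e != 0 -> injective (fun k => e *+ k).
Proof.
move=> en0 i j /= H.
have key : forall i j, (i <= j)%N -> e *+ i = e *+ j -> i = j.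
  move=> i' j' le H'; apply/eqP; rewrite eqn_leq le /=.
  have /eqP : e *+ (j' - i') = 0 by rewrite mulrnBr // H' subrr.
  by rewrite mulrn_eq0K (negPf en0) orbF subn_eq0.
case: (leqP i j) => [le|/ltnW le]; first exact: key le H.
by apply/esym/(key _ _ le)/esym.
Qed.

Lemma shift_fix (a : {poly K}) e : (1 < size a)%N -> a \Po ('X + e%:P) = a -> e = 0.
Proof.
move=> sa H; apply/eqP; apply: contraT => en0.
have Hk : forall k, a.[e *+ k] = a.[0].
  elim=> [|k IH]; first by rewrite mulr0n.
  by rewrite mulrSr -IH -{2}H horner_comp hornerD hornerX hornerC.
pose q := a - (a.[0])%:P.
have qn0 : q != 0.
  apply: contraTneq sa => /eqP; rewrite subr_eq0 => /eqP ->.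
  by rewrite -leqNgt size_polyC_leq1.
have := max_poly_roots qn0 (rs := mkseq (fun k => e *+ k) (size a)).
rewrite size_mkseq mkseq_uniq; last exact: mulrn_inj.
have -> : all (root q) (mkseq (fun k => e *+ k) (size a)).
  apply/allP => x /mapP [k _ ->]; by rewrite /root /q hornerD hornerN hornerC Hk subrr.
move=> /(_ isT isT); rewrite ltnNge.
have -> // : (size q <= size a)%N.
rewrite /q (leq_trans (size_polyD _ _)) // geq_max leqnn size_polyN.
by rewrite (leq_trans (size_polyC_leq1 _)) // ltnW.
Qed.

Lemma h_exists_const (a0 : K) (b : {poly K}) : a0 != 0 ->
  exists h : {poly K}, h^`() = a0%:P * h + b.
Proof.
move=> a0n0; have [n] := ubnP (size b); elim: n b => // n IH b sb.
have [->|bn0] := eqVneq b 0; first by exists 0; rewrite deriv0 mulr0 addr0.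
have [|h2 H2] := IH ((a0^-1)%:P * b^`()).
  rewrite size_Cmul ?invr_eq0 //; exact: leq_trans (lt_size_deriv bn0) (ltnSE sb).
exists (- (a0^-1)%:P * b + h2).
rewrite derivD derivM derivN derivC oppr0 mul0r add0r H2.
have e : a0%:P * (a0^-1)%:P = 1 by rewrite -polyCM divff.
rewrite -[X in _ = _ + X]mul1r -e; ring.
Qed.

Lemma Dab_ker (a b : {poly K}) p : a != 0 -> Dab a b p = 0 -> p = (p`_0`_0)%:P%:P.
Proof.
move=> an0 H.
have [sp|sp] := leqP (size p) 1.
  rewrite {1}(size1_polyC sp) in H *.
  move: H; rewrite /Dab /dy derivC mulr0 addr0 dxC => /polyC_inj /deriv0_const.
  by move=> e; rewrite {1}(size1_polyC sp); congr (_%:P).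
have pn0 : p != 0 by rewrite -size_poly_gt0 (ltn_trans _ sp).
set n := (size p).-1.
have n1 : (0 < n)%N by rewrite /n -subn1 subn_gt0.
move/polyP: H => /(_ n); rewrite coef_Dab coef0.
rewrite [p`_n.+1]nth_default; last by rewrite /n prednK // (ltn_trans _ sp).
rewrite mulr0 mul0rn addr0 => /eqP; rewrite addr_eq0 => /eqP H.
have : p`_n = 0.
  apply: (deriv_mul_eq0 (r := - (a *+ n))); last by rewrite H mulNr mulrnAl.
  by rewrite oppr_eq0 mulrn_eq0P negb_or -lt0n n1.
by move/eqP; rewrite -lead_coefE lead_coef_eq0 (negPf pn0).
Qed.

Lemma aut_to_h (a b : {poly K}) : (1 < size a)%N -> AutD_nontrivial (Dab a b) ->
  exists h : {poly K}, h^`() = a * h + b.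
Proof.
move=> sa [rho [[[rD rM rC [rinv rK rKi]] rDc] [p0 hp0]]].
have an0 : a != 0 by rewrite -size_poly_gt0 (ltn_trans _ sa).
have r0 : rho 0 = 0 by apply: (@addrI _ (rho 0)); rewrite -rD !addr0.
have rB : forall p q, rho (p - q) = rho p - rho q.
  by move=> p q; apply: (@addIr _ (rho q)); rewrite -rD !subrK.
have r1 : rho 1 = 1 by have := rC 1; rewrite !polyC1.
have DX1 : Dab a b ('X%:P) = 1 by rewrite /Dab /dy derivC mulr0 addr0 dxC derivX.
pose f := rho ('X%:P).
have Df : Dab a b f = 1 by rewrite /f -rDc DX1 r1.
have := @Dab_ker a b (f - 'X%:P) an0; rewrite DabB Df DX1 subrr => /(_ erefl).
move=> Hf; set e := ((f - 'X%:P)`_0)`_0 in Hf.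
have Hf' : rho ('X%:P) = ('X + e%:P)%:P by rewrite polyCD -Hf addrC subrK.
set u := 'X + e%:P in Hf'.
have rq : forall q : {poly K}, rho q%:P = (q \Po u)%:P.
  elim/poly_ind => [|q c IH]; first by rewrite polyC0 r0 comp_poly0 polyC0.
  rewrite polyCD polyCM rD rM IH Hf' rC comp_polyD comp_polyM comp_polyX comp_polyC.
  by rewrite -polyCM -polyCD.
have DX : Dab a b 'X = a%:P * 'X + b%:P by rewrite /Dab dxX /dy derivX mulr1 add0r.
set g := rho 'X.
have Dg : Dab a b g = (a \Po u)%:P * g + (b \Po u)%:P by rewrite /g -rDc DX rD rM !rq.
have [sg|sg] := leqP (size g) 1.
  exfalso; have gE := size1_polyC sg.
  have : rho ((g`_0 \Po ('X - e%:P))%:P) = rho 'X.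
    rewrite rq -comp_polyA /u comp_polyB comp_polyX comp_polyC addrK comp_polyXr.
    by rewrite -/g; exact: esym gE.
  move/(can_inj rK) => /polyP /(_ 1%N); rewrite coefC coefX /= => /eqP.
  by rewrite eq_sym oner_eq0.
have gn0 : g != 0 by rewrite -size_poly_gt0 (ltn_trans _ sg).
move Hn : (size g).-1 => n.
have n1 : (0 < n)%N by rewrite -Hn -subn1 subn_gt0.
have gnn0 : g`_n != 0 by rewrite -Hn -lead_coefE lead_coef_eq0.
have H := Dg; move/polyP: H => /(_ n).
rewrite coef_Dab [g`_n.+1]nth_default; last by rewrite -Hn prednK // (ltn_trans _ sg).
rewrite mulr0 mul0rn addr0 coefD coefCM coefC -[n == 0]negbK -lt0n n1 addr0 => H.
have Hac : a \Po u = a *+ n.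
  apply/eqP; rewrite -subr_eq0; apply/eqP.
  apply: contraTeq gnn0 => hne; apply/negPn/eqP; apply: (deriv_mul_eq0 hne).
  by rewrite mulrBl -H mulrnAl addrK.
have sz : size (a *+ n) = size a by rewrite -Hac size_comp_poly2 // size_XaddC.
have En1 : n = 1%N.
  move: (congr1 lead_coef Hac); rewrite lead_coef_comp ?size_XaddC //.
  rewrite lead_coefXaddC expr1n mulr1 [in RHS]lead_coefE sz coefMn -lead_coefE.
  move: n1 {H Hac sz Hn gnn0}; case: n => [//|m] _.
  rewrite mulrS -{1}[lead_coef a]addr0 => /addrI /esym /eqP.
  by rewrite mulrn_eq0K lead_coef_eq0 (negPf an0) orbF => /eqP ->.
rewrite En1 in Hac H Hn gnn0; rewrite mulr1n in Hac H.
have e0 : e = 0 := shift_fix sa Hac.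
have uX : u = 'X by rewrite /u e0 addr0.
rewrite uX !comp_polyXr in Dg rq.
have g1E : g`_1 = (g`_1`_0)%:P.
  by apply: deriv0_const; apply: (@addIr _ (a * g`_1)); rewrite add0r H Hac.
set al := g`_1`_0 in g1E.
have aln0 : al != 0 by move: gnn0; rewrite g1E polyC_eq0.
have := Dg; move/polyP => /(_ 0%N).
rewrite coef_Dab mulr0n addr0 coefD coefCM coefC /= mulr1n g1E => H0.
have [al1|al1] := eqVneq al 1.
  exfalso; have H0' : (g`_0)^`() = a * g`_0.
    by apply: (@addIr _ b); rewrite -[in RHS]H0 al1 polyC1 mulr1.
  have g00 : g`_0 = 0 by apply: (deriv_mul_eq0 an0); rewrite H0'.
  have gX : g = 'X.
    apply/polyP => i; rewrite coefX; case: i => [|[|i]] //=; first by rewrite g1E al1.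
    by rewrite nth_default // -(prednK (ltn_trans _ sg)) // Hn.
  apply: hp0; elim/poly_ind: p0 => [|p c IH]; first exact: r0.
  by rewrite rD rM IH -/g gX rq comp_polyXr.
exists ((1 - al)^-1%:P * g`_0).
have e1 : (1 - al)^-1%:P * (1 - al%:P) = 1.
  by rewrite -polyC1 -polyCB -polyCM mulVf // subr_eq0 eq_sym.
rewrite derivM derivC mul0r add0r.
have -> : (g`_0)^`() = a * g`_0 + b - b * al%:P by rewrite -H0 addrK.
rewrite -[X in _ = _ + X]mul1r -e1; ring.
Qed.

End Aux.

Unset Implicit Arguments. Set Strict Implicit.

Theorem corollary3p5 (K : closedFieldType) (a b : {poly K}) :
  [pchar K] =i pred0 ->
  a != 0 ->
  (1 < size a)%N \/ (1 < size b)%N ->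
  (AutD_nontrivial (Dab a b) <-> exists h : {poly K}, h^`() = a * h + b) /\
  (AutD_nontrivial (Dab a b) -> b != 0 -> (size a <= size b)%N).
Proof.
move=> hK an0 hs.
have part1 : AutD_nontrivial (Dab a b) <-> exists h : {poly K}, h^`() = a * h + b.
  split; last by case=> h Hh; apply: (@aut_from_h _ hK a b h Hh).
  move=> Haut; have [sa|sa] := ltnP 1 (size a); first exact: (@aut_to_h _ hK a b sa Haut).
  have aE := size1_polyC sa.
  have a0n0 : a`_0 != 0 by move: an0; rewrite {1}aE polyC_eq0.
  have [h Hh] := h_exists_const b a0n0.
  by exists h; rewrite Hh -aE.
split => // Haut bn0; have [h Hh] := part1.1 Haut.
have [sa|sa] := leqP (size a) 1.
  by rewrite (leq_trans sa) // size_poly_gt0.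
have hn0 : h != 0.
  by apply/eqP => h0; move: Hh; rewrite h0 deriv0 mulr0 add0r => b0; rewrite -b0 eqxx in bn0.
have bE : b = - (a * h) + h^`() by rewrite Hh; ring.
have sh : (0 < size h)%N by rewrite size_poly_gt0.
have sah : (size a <= size (a * h)%R)%N by rewrite poly.size_mul //; move: sh; case: (size h) => // m _; rewrite addnS /= leq_addr.
have shah : (size h^`() < size (a * h)%R)%N.
  have := lt_size_deriv hn0; rewrite poly.size_mul //; move: sh sa; case: (size h) => // m _; case: (size a) => // k; rewrite addnS /=; lia.
by rewrite bE size_polyDl size_polyN.
Qed.
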